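(* Let $\langle-,-\rangle$ be a cyclic form on $C$. If $v\notin\mathrm{Span}\{v_1,\dots,v_n,w_1,\dots,w_l\}$, then $$\langle\mu(v_1,\dots,v_n,v),\mu(w_1,\dots,w_l)\rangle=\langle\mu(v_1,\dots,v_n),\mu(v,w_1,\dots,w_l)\rangle.$$
   Context: $k$ is a field of characteristic zero, $V$ a $k$-vector space of dimension $m\ge1$ in degree $0$, $A=\mathrm{Sym}(V)$, and $C=A^{\textup{!`}}$ the exterior coalgebra on $sV$ with elements $\mu(v_1,\dots,v_n)=sv_1\wedge\cdots\wedge sv_n$ (the vectors in each such expression taken linearly independent), counit element $e$, and coproduct $\triangle\mu(v_1,\dots,v_n)=\sum_{p=0}^n\sum_{\sigma\in Sh_{p,n-p}}\mathrm{sgn}(\sigma)\mu(v_{\sigma(1)},\dots,v_{\sigma(p)})\otimes\mu(v_{\sigma(p+1)},\dots,v_{\sigma(n)})$. A symmetric bilinear form of degree $-d$ on $C$ is $\langle-,-\rangle:C\otimes C\to k[d]$ with $\langle a,b\rangle=(-1)^{|a||b|}\langle b,a\rangle$; it is cyclic if $\sum\langle a,b^2\rangle b^1=\sum\langle a^1,b\rangle a^2$ for all $a,b$, where $\triangle(a)=\sum a^1\otimes a^2$, $\triangle(b)=\sum b^1\otimes b^2$. *)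

(* Defs.v *)
From HB Require Import structures.
From mathcomp Require Import all_boot all_order all_algebra.
Set Implicit Arguments. Unset Strict Implicit. Unset Printing Implicit Defensive.
Import Order.TTheory GRing.Theory Num.Theory.
Local Open Scope ring_scope.

(* Model: V = k^m (row vectors 'rV[k]_m, standard basis e_0..e_{m-1}).
   C = exterior coalgebra on sV, with basis e_S = s e_{s1} /\ ... /\ s e_{sn}
   for S = {s1 < ... < sn} a subset of 'I_m; |e_S| = #|S|.
   An element of C is its coefficient function on this basis. *)
Definition coalg (k : fieldType) (m : nat) := {ffun {set 'I_m} -> k}.

Definition cbasis (k : fieldType) (m : nat) (S : {set 'I_m}) : coalg k m :=
  [ffun T : {set 'I_m} => (T == S)%:R].

Definition homog (k : fieldType) (m p : nat) (a : coalg k m) : Prop :=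
  forall S, a S != 0 -> #|S| = p.

(* mu(v_1,...,v_n) = s v_1 /\ ... /\ s v_n, where v_i is row i of A.
   Its coefficient on e_S (#|S| = n) is the n x n minor of A on the columns
   of S (taken in increasing order): the j-th column is the c in S having
   exactly j elements of S below it. *)
Definition mu (k : fieldType) (m n : nat) (A : 'M[k]_(n, m)) : coalg k m :=
  [ffun S : {set 'I_m} => if #|S| == n then
     \det (\matrix_(i < n, j < n)
             \sum_(c in S | #|[set c' in S | (c' < c)%N]| == j) A i c)
   else 0].

Definition shsign (k : fieldType) (m : nat) (P Q : {set 'I_m}) : k :=
  (-1) ^+ #|[set pq in setX P Q | (pq.2 < pq.1)%N]|.

(* Coproduct: coefficient of e_P (x) e_Q in triangle(a).
   triangle(e_S) = sum_{P sqcup Q = S} sgn(P,Q) e_P (x) e_Q. *)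
Definition coprod (k : fieldType) (m : nat) (a : coalg k m) (P Q : {set 'I_m}) : k :=
  if [disjoint P & Q] then shsign k P Q * a (P :|: Q) else 0.

Definition cform (k : fieldType) (m : nat) (B : {set 'I_m} -> {set 'I_m} -> k)
  (a b : coalg k m) : k :=
  \sum_(S : {set 'I_m}) \sum_(T : {set 'I_m}) a S * b T * B S T.

(* Form of degree -d: <a,b> = 0 unless |a| + |b| = d. *)
Definition form_degree (k : fieldType) (m : nat) (B : {set 'I_m} -> {set 'I_m} -> k)
  (d : nat) : Prop :=
  forall (p q : nat) (a b : coalg k m), homog p a -> homog q b ->
    (p + q)%N != d -> cform B a b = 0.

Definition form_symmetric (k : fieldType) (m : nat) (B : {set 'I_m} -> {set 'I_m} -> k) : Prop :=
  forall (p q : nat) (a b : coalg k m), homog p a -> homog q b ->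
    cform B a b = (-1) ^+ (p * q) * cform B b a.

(* Cyclic: sum <a, b^2> b^1 = sum <a^1, b> a^2 as elements of C,
   compared coefficientwise on each basis element e_R. *)
Definition form_cyclic (k : fieldType) (m : nat) (B : {set 'I_m} -> {set 'I_m} -> k) : Prop :=
  forall (a b : coalg k m) (R : {set 'I_m}),
    \sum_(Q : {set 'I_m}) coprod b R Q * cform B a (cbasis k Q)
    = \sum_(P : {set 'I_m}) coprod a P R * cform B (cbasis k P) b.

(* Main.v *)
Require Import Defs.
From HB Require Import structures.
From mathcomp Require Import all_boot all_order all_algebra.
From mathcomp Require Import zify.
Set Implicit Arguments. Unset Strict Implicit. Unset Printing Implicit Defensive.
Import Order.TTheory GRing.Theory Num.Theory.
Local Open Scope ring_scope.


Definition rk (m : nat) (S : {set 'I_m}) (c : 'I_m) : nat :=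
  #|[set c' in S | (c' < c)%N]|.

Lemma rk_le m (S : {set 'I_m}) (c c' : 'I_m) : (c <= c')%N -> (rk S c <= rk S c')%N.
Proof.
move=> h; apply: subset_leq_card; apply/subsetP => y; rewrite !inE.
by case/andP=> -> /= hy; exact: leq_trans hy h.
Qed.

Lemma rk_lt m (S : {set 'I_m}) (c c' : 'I_m) : c \in S -> (c < c')%N -> (rk S c < rk S c')%N.
Proof.
move=> cS h; apply: proper_card; apply/properP; split.
  apply/subsetP => y; rewrite !inE; case/andP=> -> /= hy.
  exact: ltn_trans hy h.
exists c; first by rewrite !inE cS h.
by rewrite inE ltnn andbF.
Qed.

Lemma rk_inj m (S : {set 'I_m}) (c c' : 'I_m) : c \in S -> c' \in S -> rk S c = rk S c' -> c = c'.
Proof.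
move=> cS c'S e; apply/val_inj; case: (ltngtP c c') => // h.
  by have := rk_lt cS h; rewrite e ltnn.
by have := rk_lt c'S h; rewrite e ltnn.
Qed.

Lemma rk_bound m (S : {set 'I_m}) (c : 'I_m) : (rk S c <= #|S|)%N.
Proof. by apply: subset_leq_card; apply/subsetP => y; rewrite inE => /andP[]. Qed.

Lemma rk_boundS m (S : {set 'I_m}) (c : 'I_m) : c \in S -> (rk S c < #|S|)%N.
Proof.
move=> cS; apply: proper_card; apply/properP; split.
  by apply/subsetP => y; rewrite inE => /andP[].
by exists c; rewrite // inE ltnn andbF.
Qed.

Lemma rkU m (Q : {set 'I_m}) (i c : 'I_m) : i \notin Q ->
  rk ([set i] :|: Q) c = ((i < c)%N + rk Q c)%N.
Proof.
move=> iQ; rewrite /rk.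
have -> : [set c' in [set i] :|: Q | (c' < c)%N] =
   if (i < c)%N then i |: [set c' in Q | (c' < c)%N] else [set c' in Q | (c' < c)%N].
  apply/setP => y; case: ifP => h; rewrite !inE; case: (eqVneq y i) => [->|] //=; rewrite ?h ?andbF //=.
case: ifP => h; last by [].
by rewrite cardsU1 inE (negbTE iQ).
Qed.


Definition Sel (k : fieldType) m (S : {set 'I_m}) p : 'M[k]_(m, p) :=
  \matrix_(c, j) ((c \in S) && (rk S c == j))%:R.

Lemma muE (k : fieldType) m n (A : 'M[k]_(n, m)) S :
  mu A S = if #|S| == n then \det (A *m Sel k S n) else 0.
Proof.
rewrite ffunE; case: ifP => // _; congr (\det _); apply/matrixP => i j.
rewrite !mxE big_mkcond /=; apply: eq_bigr => c _; rewrite !mxE /rk.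
by case: ifP; rewrite ?mulr1 ?mulr0.
Qed.

Lemma eqb_iff (a b c d : nat) : (a = b <-> c = d) -> (a == b) = (c == d).
Proof. by move=> [h1 h2]; apply/eqP/eqP. Qed.

Lemma neqb (a b : nat) : a <> b -> (a == b) = false.
Proof. by move/eqP/negbTE. Qed.

Lemma Sel_col' (k : fieldType) m (Q : {set 'I_m}) i p (j0 : 'I_p.+1) :
  i \notin Q -> nat_of_ord j0 = rk Q i ->
  col' j0 (Sel k ([set i] :|: Q) p.+1) = Sel k Q p.
Proof.
move=> iQ hj0; apply/matrixP => c [j hj]; rewrite !mxE rkU // /bump /=.
rewrite !inE; case: (eqVneq c i) => [->|nci] /=.
  by rewrite (negbTE iQ) ltnn add0n -hj0 (negbTE (neq_bump _ _)).
case cQ: (c \in Q) => //=.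
case: (ltngtP i c) => h.
- have := rk_le Q (ltnW h); rewrite -hj0 => h2.
  by rewrite /bump /=; congr (_%:R); case: (leqP j0 j) => hh /=; congr (nat_of_bool _); apply: eqb_iff; split=> ?; lia.
- have := rk_lt cQ h; rewrite -hj0 => h2.
  by rewrite /bump /=; congr (_%:R); case: (leqP j0 j) => hh /=; congr (nat_of_bool _); apply: eqb_iff; split=> ?; lia.
- by case/eqP: nci; apply/val_inj; rewrite /= h.
Qed.

Lemma Sel_j0 (k : fieldType) m (Q : {set 'I_m}) i p (j0 : 'I_p.+1) c :
  i \notin Q -> nat_of_ord j0 = rk Q i ->
  Sel k ([set i] :|: Q) p.+1 c j0 = (c == i)%:R.
Proof.
move=> iQ hj0; rewrite !mxE rkU // !inE; case: (eqVneq c i) => [->|nci] /=.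
  by rewrite ltnn add0n hj0 eqxx.
case cQ: (c \in Q) => //=.
case: (ltngtP i c) => h.
- have := rk_le Q (ltnW h); rewrite -hj0 => h2.
  by rewrite /= neqb //; lia.
- have := rk_lt cQ h; rewrite -hj0 => h2.
  by rewrite /= neqb //; lia.
- by case/eqP: nci; apply/val_inj; rewrite /= h.
Qed.

Lemma Sel_uniq (k : fieldType) m (Q : {set 'I_m}) p (j : 'I_p) c :
  c \in Q -> nat_of_ord j = rk Q c -> forall c', Sel k Q p c' j = (c' == c)%:R.
Proof.
move=> cQ hj c'; rewrite !mxE; case: (eqVneq c' c) => [->|nc]; first by rewrite cQ hj eqxx.
case c'Q: (c' \in Q) => //=; case: eqP => // h; case/eqP: nc.
by apply: (rk_inj c'Q cQ); rewrite h.
Qed.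


Lemma row'_mulmx (k : fieldType) a b c (r : 'I_a.+1) (A : 'M[k]_(a.+1, b)) (X : 'M[k]_(b, c)) :
  row' r (A *m X) = row' r A *m X.
Proof. by apply/matrixP => i j; rewrite !mxE; apply: eq_bigr => l _; rewrite !mxE. Qed.

Lemma col'_mulmx (k : fieldType) a b c (j0 : 'I_c.+1) (A : 'M[k]_(a, b)) (X : 'M[k]_(b, c.+1)) :
  col' j0 (A *m X) = A *m col' j0 X.
Proof. by apply/matrixP => i j; rewrite !mxE; apply: eq_bigr => l _; rewrite !mxE. Qed.

Lemma sum_delta (k : fieldType) m (F : 'I_m -> k) (i : 'I_m) :
  \sum_c F c * (c == i)%:R = F i.
Proof.
rewrite (bigD1 i) //= eqxx mulr1 big1 ?addr0 // => c /negbTE ->; by rewrite mulr0.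
Qed.

Lemma sign_cancel (R : pzRingType) (a b : nat) (x : R) :
  (-1) ^+ a * ((-1) ^+ (b + a) * x) = (-1) ^+ b * x.
Proof.
by rewrite mulrA -exprD addnCA addnn -muln2 exprD exprM sqrr_sign mulr1.
Qed.

Lemma expand_sel (k : fieldType) m p (A : 'M[k]_(p.+1, m)) (Q : {set 'I_m}) i :
  i \notin Q -> #|Q| = p ->
  (-1) ^+ (rk Q i) * \det (A *m Sel k ([set i] :|: Q) p.+1)
  = \sum_r A r i * ((-1) ^+ r * \det (row' r A *m Sel k Q p)).
Proof.
move=> iQ hQ.
have hb : (rk Q i < p.+1)%N by rewrite ltnS -hQ rk_bound.
pose j0 : 'I_p.+1 := Ordinal hb.
rewrite (expand_det_col _ j0) mulr_sumr; apply: eq_bigr => r _.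
rewrite /cofactor col'_mulmx (Sel_col' _ iQ) // row'_mulmx.
have -> : (A *m Sel k ([set i] :|: Q) p.+1) r j0 = A r i.
  by rewrite mxE -[RHS](sum_delta (A r)); apply: eq_bigr => c _; rewrite (Sel_j0 _ _ iQ).
rewrite mulrCA; congr (_ * _); exact: sign_cancel.
Qed.

Lemma expand_zero (k : fieldType) m p (A : 'M[k]_(p.+1, m)) (Q : {set 'I_m}) c :
  c \in Q -> #|Q| = p ->
  \sum_r A r c * ((-1) ^+ r * \det (row' r A *m Sel k Q p)) = 0.
Proof.
move=> cQ hQ.
pose N : 'M[k]_p.+1 := \matrix_(r, j) match unlift ord0 j with
   | Some j' => (A *m Sel k Q p) r j' | None => A r c end.
have hb : (rk Q c < p)%N by rewrite -hQ rk_boundS.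
pose jc : 'I_p := Ordinal hb.
have : \det N = 0.
  rewrite -det_tr; apply: (@determinant_alternate _ _ _ ord0 (lift ord0 jc)).
    exact: neq_lift.
  move=> r; rewrite !mxE unlift_none liftK mxE.
  rewrite -[LHS](sum_delta (A r) c); apply: eq_bigr => c' _.
  by rewrite (Sel_uniq _ cQ).
move=> h; rewrite -[RHS]h (expand_det_col N ord0); apply: eq_bigr => r _.
rewrite /cofactor addn0 mxE unlift_none; congr (_ * (_ * \det _)).
apply/matrixP => i j; rewrite !mxE liftK mxE; apply: eq_bigr => l _; by rewrite !mxE.
Qed.

Lemma contract (k : fieldType) m p (A : 'M[k]_(p.+1, m)) (Q : {set 'I_m})
  (f : 'cV[k]_m) (r0 : 'I_p.+1) :
  #|Q| = p -> (forall r, \sum_i A r i * f i 0 = (r == r0)%:R) ->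
  \sum_i f i 0 * (if [disjoint [set i] & Q] then
       (-1) ^+ (rk Q i) * \det (A *m Sel k ([set i] :|: Q) p.+1) else 0)
  = (-1) ^+ r0 * \det (row' r0 A *m Sel k Q p).
Proof.
move=> hQ hf.
transitivity (\sum_i f i 0 * \sum_r A r i * ((-1) ^+ r * \det (row' r A *m Sel k Q p))).
  apply: eq_bigr => i _; rewrite disjoints1; case: ifP => iQ.
    by rewrite expand_sel.
  by rewrite expand_zero ?mulr0 //; apply/negbFE.
under eq_bigr do rewrite mulr_sumr.
rewrite exchange_big /=.
transitivity (\sum_r (r == r0)%:R * ((-1) ^+ r * \det (row' r A *m Sel k Q p))).
  apply: eq_bigr => r _; rewrite -hf mulr_suml; apply: eq_bigr => i _.
  by rewrite mulrA (mulrC (f i 0)).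
rewrite (bigD1 r0) //= eqxx mul1r big1 ?addr0 // => r /negbTE ->; by rewrite mul0r.
Qed.


Lemma shsign1l (k : fieldType) m (Q : {set 'I_m}) i :
  shsign k [set i] Q = (-1) ^+ (rk Q i).
Proof.
rewrite /shsign /rk; congr (_ ^+ _).
have inj : injective (fun b : 'I_m => (i, b)) by move=> a b [].
rewrite -(card_imset _ inj).
apply: eq_card => -[a b]; rewrite [in LHS]inE /=.
apply/andP/imsetP => [[/setXP[/set1P -> bQ] hb]|[b' ]].
  by exists b => //; rewrite inE bQ hb.
by rewrite inE => /andP[b'Q hb'] [-> ->]; rewrite !inE eqxx b'Q hb'.
Qed.

Lemma shsign1r (k : fieldType) m (P : {set 'I_m}) i : i \notin P ->
  shsign k P [set i] = (-1) ^+ #|P| * (-1) ^+ (rk P i).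
Proof.
move=> iP.
have hc : shsign k P [set i] = (-1) ^+ #|[set p in P | (i < p)%N]|.
  rewrite /shsign; congr (_ ^+ _).
  have inj : injective (fun b : 'I_m => (b, i)) by move=> a b [].
  rewrite -(card_imset _ inj).
  apply: eq_card => -[a b]; rewrite [in LHS]inE /=.
  apply/andP/imsetP => [[/setXP[aP /set1P ->] hb]|[b' ]].
    by exists a => //; rewrite inE aP hb.
  by rewrite inE => /andP[b'P hb'] [-> ->]; rewrite !inE eqxx b'P hb'.
have hs : #|P| = (#|[set p in P | (i < p)%N]| + rk P i)%N.
  rewrite -(cardsID [set p : 'I_m | (p < i)%N] P) addnC /rk; congr (_ + _)%N.
    apply: eq_card => p; rewrite !inE; case pP: (p \in P); rewrite /= ?andbF //.
    rewrite ltnNge leq_eqVlt negb_or; case: (ltngtP p i) => //= h.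
    by move: iP; rewrite -(val_inj h) pP.
  by apply: eq_card => p; rewrite !inE.
rewrite hc hs.
by rewrite -exprD -addnA addnn -muln2 exprD exprM sqrr_sign mulr1.
Qed.


Lemma L1 (k : fieldType) m l (x : 'rV[k]_m) (w : 'M[k]_(l, m)) (f : 'cV[k]_m)
  (Q : {set 'I_m}) :
  \sum_i x 0 i * f i 0 = 1 -> (forall j, \sum_i w j i * f i 0 = 0) ->
  \sum_i f i 0 * coprod (mu (col_mx x w)) [set i] Q = mu w Q.
Proof.
move=> hx hw; rewrite [RHS]muE.
have cS : forall i, i \notin Q -> #|[set i] :|: Q| = (1 + #|Q|)%N.
  by move=> i iQ; rewrite cardsU1 iQ.
case: eqP => hQ; last first.
  rewrite big1 // => i _; rewrite /coprod disjoints1; case: ifP => iQ; last by rewrite mulr0.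
  by rewrite muE cS // eqn_add2l; move/eqP: hQ => /negbTE ->; rewrite !mulr0.
have e0 : (ord0 : 'I_(1 + l)) = lshift l (ord0 : 'I_1) by apply: val_inj.
have eS : forall j : 'I_l, lift (ord0 : 'I_(1 + l)) j = rshift 1 j by move=> j; apply: val_inj.
have hr : row' ord0 (col_mx x w) = w.
  by apply/matrixP => a b; rewrite mxE eS; exact: (col_mxEd x w).
have hf : forall r, \sum_i (col_mx x w : 'M_(l.+1, m)) r i * f i 0 = (r == ord0)%:R.
  move=> r; case: (unliftP ord0 r) => [j ->|->].
    rewrite eq_sym (negbTE (neq_lift _ _)) /= mulr0n -[RHS](hw j); apply: eq_bigr => i _.
    by rewrite eS; congr (_ * _); exact: (col_mxEd x w).
  rewrite eqxx -[RHS]hx; apply: eq_bigr => i _; rewrite e0; congr (_ * _); exact: (col_mxEu x w).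
have := @contract k m l (col_mx x w) Q f ord0 hQ hf.
rewrite expr0 mul1r hr => <-.
apply: eq_bigr => i _; congr (_ * _).
rewrite /coprod disjoints1; case: ifP => // iQ.
by rewrite muE cS // hQ eqxx shsign1l.
Qed.

Lemma mu_cast (k : fieldType) m a b (e : a = b) (A : 'M[k]_(a, m)) :
  mu (castmx (e, erefl m) A) = mu A.
Proof. by case: b / e; rewrite castmx_id. Qed.

Lemma L2 (k : fieldType) m n (v : 'M[k]_(n, m)) (x : 'rV[k]_m) (f : 'cV[k]_m)
  (P : {set 'I_m}) :
  \sum_i x 0 i * f i 0 = 1 -> (forall j, \sum_i v j i * f i 0 = 0) ->
  \sum_i f i 0 * coprod (mu (col_mx v x)) P [set i] = mu v P.
Proof.
move=> hx hv; rewrite [RHS]muE -(mu_cast (addn1 n)).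
set A := castmx _ _.
have cS : forall i, i \notin P -> #|P :|: [set i]| = (#|P|).+1.
  by move=> i iP; rewrite setUC cardsU1 iP.
case: eqP => hP; last first.
  rewrite big1 // => i _; rewrite /coprod disjoint_sym disjoints1; case: ifP => iP; last by rewrite mulr0.
  by rewrite muE cS // eqSS; move/eqP: hP => /negbTE ->; rewrite !mulr0.
have hr : row' ord_max A = v.
  apply/matrixP => a b; rewrite mxE castmxE /=.
  have -> : cast_ord (esym (addn1 n)) (lift ord_max a) = lshift 1 a.
    by apply: val_inj; exact: lift_max.
  rewrite cast_ord_id; exact: (col_mxEu v x).
have hf : forall r, \sum_i A r i * f i 0 = (r == ord_max)%:R.
  move=> r; case: (unliftP ord_max r) => [j ->|->].
    rewrite eq_sym (negbTE (neq_lift _ _)) /= mulr0n -[RHS](hv j); apply: eq_bigr => i _.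
    rewrite castmxE /=.
    have -> : cast_ord (esym (addn1 n)) (lift ord_max j) = lshift 1 j.
      by apply: val_inj; exact: lift_max.
    by rewrite cast_ord_id; congr (_ * _); exact: (col_mxEu v x).
  rewrite eqxx -[RHS]hx; apply: eq_bigr => i _; rewrite castmxE /=.
  have -> : cast_ord (esym (addn1 n)) ord_max = rshift n (0 : 'I_1).
    by apply: val_inj; rewrite /= addn0.
  by rewrite cast_ord_id; congr (_ * _); exact: (col_mxEd v x).
have := @contract k m n A P f ord_max hP hf.
rewrite hr /= => h.
rewrite -[RHS]mul1r -[1](sqrr_sign _ n) expr2 -mulrA -h mulr_sumr.
apply: eq_bigr => i _; rewrite mulrCA; congr (_ * _).
rewrite /coprod disjoint_sym disjoints1; case: ifP => iP; last by rewrite mulr0.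
rewrite muE cS // hP eqxx shsign1r // hP -mulrA setUC.
by [].
Qed.


Lemma cformR (k : fieldType) m (B : {set 'I_m} -> {set 'I_m} -> k) a b :
  cform B a b = \sum_Q b Q * cform B a (cbasis k Q).
Proof.
rewrite /cform exchange_big; apply: eq_bigr => T _.
rewrite mulr_sumr; apply: eq_bigr => S _.
rewrite (bigD1 T) //= big1 ?addr0 => [|T' /negbTE nT]; last by rewrite ffunE nT mulr0 mul0r.
by rewrite ffunE eqxx mulr1 mulrCA mulrA.
Qed.

Lemma cformL (k : fieldType) m (B : {set 'I_m} -> {set 'I_m} -> k) a b :
  cform B a b = \sum_P a P * cform B (cbasis k P) b.
Proof.
rewrite /cform; apply: eq_bigr => S _.
rewrite [in RHS](bigD1 S) //= [X in _ = _ * (_ + X)]big1 ?addr0 => [|S' /negbTE nS]; last first.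
  by apply: big1 => T _; rewrite ffunE nS mul0r mul0r.
rewrite mulr_sumr; apply: eq_bigr => T _.
by rewrite ffunE eqxx mul1r !mulrA.
Qed.

Lemma getf (k : fieldType) m n l (v : 'M[k]_(n, m)) (w : 'M[k]_(l, m)) (x : 'rV[k]_m) :
  ~~ (x <= col_mx v w)%MS ->
  exists f : 'cV[k]_m, [/\ \sum_i x 0 i * f i 0 = 1,
     (forall j, \sum_i v j i * f i 0 = 0) & (forall j, \sum_i w j i * f i 0 = 0)].
Proof.
rewrite submxE; set C := cokermx _ => hx.
have := mulmx_coker (col_mx v w); rewrite -/C mul_col_mx => /eqP.
rewrite col_mx_eq0 => /andP[/eqP hv /eqP hw].
have [j hj] : exists j, (x *m C) 0 j != 0.
  case: (pickP (fun j => (x *m C) 0 j != 0)) => [j hj | h0]; first by exists j.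
  case/negP: hx; apply/eqP/matrixP => a b; rewrite ord1 mxE.
  by rewrite [RHS]mxE; have := h0 b; rewrite /= mxE => /negbFE/eqP.
exists (((x *m C) 0 j)^-1 *: col j C); split.
- rewrite -[RHS](mulVf hj) [X in _ * X]mxE mulr_sumr; apply: eq_bigr => i _.
  by rewrite !mxE mulrCA.
- move=> r; rewrite -[RHS](mulr0 ((x *m C) 0 j)^-1).
  rewrite -[X in _ * X](_ : (v *m C) r j = 0); last by rewrite hv mxE.
  rewrite [(v *m C) r j]mxE mulr_sumr; apply: eq_bigr => i _.
  by rewrite !mxE mulrCA.
- move=> r; rewrite -[RHS](mulr0 ((x *m C) 0 j)^-1).
  rewrite -[X in _ * X](_ : (w *m C) r j = 0); last by rewrite hw mxE.
  rewrite [(w *m C) r j]mxE mulr_sumr; apply: eq_bigr => i _.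
  by rewrite !mxE mulrCA.
Qed.

Unset Implicit Arguments. Set Strict Implicit. Set Printing Implicit Defensive.
Theorem proposition9p2 (k : fieldType) (m : nat) (d : nat)
  (B : {set 'I_m} -> {set 'I_m} -> k)
  (hchar : [pchar k] =i pred0) (hm : (0 < m)%N)
  (hdeg : form_degree B d) (hsym : form_symmetric B) (hcyc : form_cyclic B)
  (n l : nat) (v : 'M[k]_(n, m)) (w : 'M[k]_(l, m)) (x : 'rV[k]_m)
  (hv : row_free v) (hw : row_free w)
  (hx : ~~ (x <= col_mx v w)%MS) :
  cform B (mu (col_mx v x)) (mu w) = cform B (mu v) (mu (col_mx x w)).
Proof.
have [f [hfx hfv hfw]] := getf hx.
rewrite cformR [RHS]cformL.
transitivity (\sum_Q (\sum_i f i 0 * coprod (mu (col_mx x w)) [set i] Q)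
                 * cform B (mu (col_mx v x)) (cbasis k Q)).
  by apply: eq_bigr => Q _; rewrite L1.
transitivity (\sum_P (\sum_i f i 0 * coprod (mu (col_mx v x)) P [set i])
                 * cform B (cbasis k P) (mu (col_mx x w))); last first.
  by apply: eq_bigr => P _; rewrite L2.
under eq_bigr do rewrite mulr_suml.
under [RHS]eq_bigr do rewrite mulr_suml.
rewrite exchange_big [RHS]exchange_big; apply: eq_bigr => i _.
have := hcyc (mu (col_mx v x)) (mu (col_mx x w)) [set i].
move=> h; transitivity (f i 0 * \sum_Q coprod (mu (col_mx x w)) [set i] Q
                               * cform B (mu (col_mx v x)) (cbasis k Q)).
  by rewrite mulr_sumr; apply: eq_bigr => Q _; rewrite mulrA.
rewrite h mulr_sumr; apply: eq_bigr => P _; by rewrite mulrA.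
Qed.
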